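(* Let \[ P(z,\bar z)=\sum_{k=0}^n\sum_{j=0}^k\alpha_{j,k-j}z^j\bar z^{\,k-j} \] be a polyanalytic polynomial of degree $n$ such that there exists $\ell\in\{0,1,\ldots,n\}$ with \[ \alpha_n := |\alpha_{\ell,n-\ell}|-\sum_{j=0,\,j\neq\ell}^n|\alpha_{j,n-j}|>0. \] Define the real polynomial \[ q(t)=t^n-\sum_{k=0}^{n-1}c_kt^k,\qquad c_k=\sum_{j=0}^k\frac{|\alpha_{j,k-j}|}{\alpha_n},\quad k=0,1,\ldots,n-1. \] If not all $c_k$ are zero, then $q$ has a unique positive zero $r_0>0$; otherwise set $r_0=0$. Then: (i) every zero $z$ of $P$ satisfies $|z|\leq r_0$; (ii) $r_0\leq r_1:=\max\Bigl\{1,\sum_{k=0}^{n-1}\sum_{j=0}^k\frac{|\alpha_{j,k-j}|}{\alpha_n}\Bigr\}$ and $r_0\leq r_2:=1+\max\Bigl\{\sum_{j=0}^k\frac{|\alpha_{j,k-j}|}{\alpha_n}:k=0,1,\ldots,n-1\Bigr\}$.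
   Context: A polyanalytic polynomial is a function $\mathbb{C}\to\mathbb{C}$ of the form given, with complex coefficients $\alpha_{j,k-j}$; its degree is the largest $k$ such that some $\alpha_{j,k-j}\neq 0$. A zero of $P$ is a point $z\in\mathbb{C}$ with $P(z,\bar z)=0$. *)

(* Defs.v *)
From HB Require Import structures.
From mathcomp Require Import all_boot all_order all_algebra.
From mathcomp Require Import complex.
Set Implicit Arguments. Unset Strict Implicit. Unset Printing Implicit Defensive.
Import Order.TTheory GRing.Theory Num.Theory.
Local Open Scope ring_scope.

Definition cabs (R : rcfType) (z : R[i]) : R := Normc.normc z.

Definition polyan (R : rcfType) (alpha : nat -> nat -> R[i]) (n : nat) (z : R[i]) : R[i] :=
  \sum_(k < n.+1) \sum_(j < k.+1)
     alpha j (k - j)%N * z ^+ j * (conjc z) ^+ (k - j)%N.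

Definition alpha_top (R : rcfType) (alpha : nat -> nat -> R[i]) (n l : nat) : R :=
  cabs (alpha l (n - l)%N) - \sum_(j < n.+1 | (j : nat) != l) cabs (alpha j (n - j)%N).

Definition ccoef (R : rcfType) (alpha : nat -> nat -> R[i]) (n l k : nat) : R :=
  \sum_(j < k.+1) cabs (alpha j (k - j)%N) / alpha_top alpha n l.

Definition q_of_P (R : rcfType) (alpha : nat -> nat -> R[i]) (n l : nat) : {poly R} :=
  'X^n - \sum_(k < n) (ccoef alpha n l k)%:P * 'X^k.

(* Main.v *)
Require Import Defs.
From HB Require Import structures.
From mathcomp Require Import all_boot all_order all_algebra.
From mathcomp Require Import complex.
Import Order.TTheory GRing.Theory Num.Theory.
Local Open Scope ring_scope.
Module M_H1.
Set Implicit Arguments. Unset Strict Implicit. Unset Printing Implicit Defensive.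

Section N.
Variable R : rcfType.
Implicit Types x y z : R[i].

Lemma cabs_ge0 x : 0 <= cabs x.
Proof. by case: x => a b; rewrite /cabs /Normc.normc sqrtr_ge0. Qed.

Lemma cabsM x y : cabs (x * y) = cabs x * cabs y.
Proof. exact: Normc.normcM. Qed.

Lemma cabsD x y : cabs (x + y) <= cabs x + cabs y.
Proof. exact: le_normcD. Qed.

Lemma cabsN x : cabs (- x) = cabs x.
Proof. exact: normcN. Qed.

Lemma cabs0 : cabs (0 : R[i]) = 0.
Proof. exact: Normc.normc0. Qed.

Lemma cabs1 : cabs (1 : R[i]) = 1.
Proof. exact: Normc.normc1. Qed.

Lemma cabsJ x : cabs (conjc x) = cabs x.
Proof. by case: x => a b; rewrite /cabs /Normc.normc /= sqrrN. Qed.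

Lemma cabsX x k : cabs (x ^+ k) = cabs x ^+ k.
Proof. by elim: k => [|k IH]; rewrite ?expr0 ?cabs1 // !exprS cabsM IH. Qed.

Lemma cabsB x y : cabs x - cabs y <= cabs (x + y).
Proof.
have := cabsD (x + y) (- y); rewrite addrK cabsN => h.
by rewrite lerBlDr.
Qed.

Lemma cabs_sum (I : Type) (r : seq I) (P : pred I) (F : I -> R[i]) :
  cabs (\sum_(i <- r | P i) F i) <= \sum_(i <- r | P i) cabs (F i).
Proof.
apply: (big_rec2 (fun a b => cabs b <= a)); first by rewrite cabs0.
by move=> i a b _ h; apply: le_trans (cabsD _ _) _; rewrite lerD2l.
Qed.
End N.
End M_H1.
Import M_H1.
Module M_H2.
Set Implicit Arguments. Unset Strict Implicit. Unset Printing Implicit Defensive.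

Section Q.
Variable R : rcfType.
Variables (alpha : nat -> nat -> R[i]) (n l : nat).
Hypothesis ha : 0 < alpha_top alpha n l.
Local Notation a := (alpha_top alpha n l).
Local Notation c := (ccoef alpha n l).
Local Notation q := (q_of_P alpha n l).

Lemma qE t : q.[t] = t ^+ n - \sum_(k < n) c k * t ^+ k.
Proof.
rewrite /q_of_P hornerD hornerN hornerXn horner_sum; congr (_ - _).
by apply: eq_bigr => k _; rewrite hornerCM hornerXn.
Qed.

Lemma c_ge0 k : 0 <= c k.
Proof. by apply: sumr_ge0 => j _; rewrite divr_ge0 ?cabs_ge0 // ltW. Qed.

Lemma f_ge0 t : 0 <= t -> 0 <= \sum_(k < n) c k * t ^+ k.
Proof. by move=> t0; apply: sumr_ge0 => k _; rewrite mulr_ge0 ?c_ge0 ?exprn_ge0. Qed.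

Lemma powle (s t : R) j m : 0 < s -> s < t -> (j <= m)%N ->
  t ^+ j * s ^+ m <= t ^+ m * s ^+ j.
Proof.
move=> s0 st km; have t0 : 0 < t by apply: lt_trans st.
rewrite -(subnKC km) !exprD mulrA -[X in _ <= X]mulrA [t ^+ (m - j) * _]mulrC mulrA.
apply: ler_wpM2l; first by rewrite mulr_ge0 ?exprn_ge0 // ltW.
by rewrite lerXn2r // ?nnegrE ltW.
Qed.

Lemma mono s t : 0 < s -> s < t -> 0 <= q.[s] -> 0 < q.[t].
Proof.
move=> s0 st; rewrite !qE; have [n0|npos] := posnP n.
  by rewrite n0 !big_ord0 subr0 expr0 ltr01.
set m := n.-1; have Hn : n = m.+1 by rewrite prednK.
rewrite !subr_ge0 !subr_gt0 => hs.
have t0 : 0 < t by apply: lt_trans st.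
have key : (\sum_(k < n) c k * t ^+ k) * s ^+ m <= t ^+ m * \sum_(k < n) c k * s ^+ k.
  rewrite mulr_suml mulr_sumr; apply: ler_sum => k _.
  have km : (k <= m)%N by rewrite -ltnS -Hn.
  rewrite -mulrA [t ^+ m * _]mulrCA; apply: ler_wpM2l; first exact: c_ge0.
  exact: powle.
have h2 : t ^+ m * \sum_(k < n) c k * s ^+ k <= t ^+ m * s ^+ n.
  by apply: ler_wpM2l => //; rewrite exprn_ge0 // ltW.
have h3 : t ^+ m * s ^+ n < t ^+ n * s ^+ m.
  rewrite Hn exprS [t ^+ m.+1]exprS mulrCA -mulrA.
  by rewrite ltr_pM2r // mulr_gt0 ?exprn_gt0.
have := le_lt_trans key (le_lt_trans h2 h3).
by rewrite ltr_pM2r // exprn_gt0.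
Qed.

Lemma geom (M : R) k : M * \sum_(i < k) (1 + M) ^+ i = (1 + M) ^+ k - 1.
Proof.
elim: k => [|k IH]; first by rewrite big_ord0 mulr0 expr0 subrr.
by rewrite big_ord_recr /= mulrDr IH exprS mulrDl mul1r addrAC addrC.
Qed.

Lemma q_r1 : 0 <= q.[Num.max 1 (\sum_(k < n) c k)].
Proof.
set r := Num.max 1 _; have r1 : 1 <= r by rewrite le_max lexx.
have r0 : 0 <= r by apply: le_trans r1.
rewrite qE subr_ge0; have [n0|npos] := posnP n.
  by rewrite n0 big_ord0 expr0.
set m := n.-1; have Hn : n = m.+1 by rewrite prednK.
apply: (@le_trans _ _ ((\sum_(k < n) c k) * r ^+ m)).
  rewrite mulr_suml; apply: ler_sum => k _; apply: ler_wpM2l; first exact: c_ge0.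
  have km : (k <= m)%N by rewrite -ltnS -Hn.
  move: (nat_of_ord k) km => j km.
  by rewrite -(subnKC km) exprD ler_peMr ?exprn_ge0 ?exprn_ege1.
rewrite [in r ^+ n]Hn exprS ler_wpM2r ?exprn_ge0 //.
by rewrite /r le_max lexx orbT.
Qed.

Lemma q_r2 : 0 <= q.[1 + \big[Num.max/0]_(k < n) c k].
Proof.
set M := \big[Num.max/0]_(k < n) c k.
have M0 : 0 <= M by rewrite /M; elim/big_ind: _ => // [x y hx hy|k _]; [by rewrite le_max hx | exact: c_ge0].
rewrite qE subr_ge0.
apply: (@le_trans _ _ (M * \sum_(k < n) (1 + M) ^+ k)).
  rewrite mulr_sumr; apply: ler_sum => k _; apply: ler_wpM2r.
    by rewrite exprn_ge0 // addr_ge0.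
  exact: le_bigmax.
by rewrite geom lerBlDr lerDl.
Qed.

Lemma small k0 : (k0 < n)%N -> c k0 != 0 ->
  exists e, 0 < e /\ q.[e] <= 0.
Proof.
move=> kn ck; have cp : 0 < c k0 by rewrite lt_def ck c_ge0.
exists (c k0 / (1 + c k0)).
have d0 : 0 < 1 + c k0 by rewrite addr_gt0.
set e := c k0 / _.
have e0 : 0 < e by rewrite divr_gt0.
have e1 : e <= 1 by rewrite ler_pdivrMr // mul1r lerDr ltW.
have ec : e <= c k0.
  by rewrite ler_pdivrMr // ler_peMr ?lerDl ?ltW.
split => //; rewrite qE subr_le0.
rewrite (bigD1 (Ordinal kn)) //=; rewrite -[in e ^+ n](subnKC kn) exprD.
apply: (@le_trans _ _ (c k0 * e ^+ k0)); last first.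
  by rewrite lerDl; apply: sumr_ge0 => i _; rewrite mulr_ge0 ?c_ge0 ?exprn_ge0 ?ltW.
rewrite exprS -mulrA; apply: (@le_trans _ _ (e * e ^+ k0)).
  apply: ler_wpM2l; first exact: ltW.
  by apply: ler_piMr; [rewrite exprn_ge0 // ltW | rewrite exprn_ile1 // ltW].
by apply: ler_wpM2r; [rewrite exprn_ge0 // ltW | ].
Qed.

End Q.

Lemma bigmax_c_ge0 (R : rcfType) (alpha : nat -> nat -> R[i]) (n l : nat) :
  0 < alpha_top alpha n l -> 0 <= \big[Num.max/0]_(k < n) ccoef alpha n l k.
Proof.
move=> ha; apply: (big_ind (fun x => 0 <= x)) => // [x y hx hy|k _]; [by rewrite le_max hx | exact: c_ge0].
Qed.
End M_H2.
Import M_H2.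
Module M_H3.
Set Implicit Arguments. Unset Strict Implicit. Unset Printing Implicit Defensive.

Section Z.
Variable R : rcfType.
Variables (alpha : nat -> nat -> R[i]) (n l : nat).
Hypothesis ha : 0 < alpha_top alpha n l.
Hypothesis hl : (l <= n)%N.
Local Notation a := (alpha_top alpha n l).
Local Notation c := (ccoef alpha n l).
Local Notation q := (q_of_P alpha n l).

Lemma cabs_term (z : R[i]) k j : (j <= k)%N ->
  cabs (alpha j (k - j)%N * z ^+ j * conjc z ^+ (k - j)%N) = cabs (alpha j (k - j)%N) * cabs z ^+ k.
Proof. by move=> jk; rewrite !cabsM !cabsX cabsJ -mulrA -exprD subnKC. Qed.

Lemma zero_q (z : R[i]) : polyan alpha n z = 0 -> q.[cabs z] <= 0.
Proof.
move=> hz; set r := cabs z.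
move: hz; rewrite /polyan big_ord_recr /=.
set L := \sum_(k < n) _; set T := \sum_(j < n.+1) _ => hz.
have hL : cabs L <= a * \sum_(k < n) c k * r ^+ k.
  apply: le_trans (cabs_sum _ _ _) _; rewrite mulr_sumr; apply: ler_sum => k _.
  apply: le_trans (cabs_sum _ _ _) _.
  rewrite /ccoef -mulr_suml mulrA mulrCA divff ?gt_eqF // mulr1 mulr_suml.
  by apply: ler_sum => j _; rewrite cabs_term // -ltnS.
have hT : a * r ^+ n <= cabs T.
  rewrite /T (bigD1 (Ordinal (hl : (l < n.+1)%N))) //=.
  apply: le_trans (cabsB _ _); rewrite cabs_term // /alpha_top mulrBl lerB //.
  apply: le_trans (cabs_sum _ _ _) _; rewrite mulr_suml.
  rewrite [X in _ <= X](eq_bigl (fun i : 'I_n.+1 => i != Ordinal (hl : (l < n.+1)%N))); last first.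
    by move=> i; rewrite -val_eqE.
  by apply: ler_sum => j _; rewrite cabs_term // -ltnS.
have : cabs T - cabs L <= 0.
  by have := cabsB T L; rewrite [T + L]addrC hz cabs0.
move=> h; rewrite qE.
have : a * (r ^+ n - \sum_(k < n) c k * r ^+ k) <= 0.
  rewrite mulrBr; apply: le_trans h; exact: lerB.
by rewrite pmulr_rle0.
Qed.
End Z.
End M_H3.
Import M_H3.
Unset Implicit Arguments. Set Strict Implicit.

Theorem theorem3p1 (R : rcfType) (alpha : nat -> nat -> R[i]) (n l : nat) :
  (* P has degree n *)
  (exists j : nat, (j <= n)%N /\ alpha j (n - j)%N != 0) ->
  (l <= n)%N ->
  0 < alpha_top alpha n l ->
  exists r0 : R,
    ((forall k : nat, (k < n)%N -> ccoef alpha n l k = 0) -> r0 = 0) /\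
    ((exists k : nat, (k < n)%N /\ ccoef alpha n l k != 0) ->
       0 < r0 /\ (q_of_P alpha n l).[r0] = 0 /\
       (forall t : R, 0 < t -> (q_of_P alpha n l).[t] = 0 -> t = r0)) /\
    (forall z : R[i], polyan alpha n z = 0 -> cabs z <= r0) /\
    r0 <= Num.max 1 (\sum_(k < n) ccoef alpha n l k) /\
    r0 <= 1 + \big[Num.max/0]_(k < n) ccoef alpha n l k.
Proof.
move=> _ hl ha.
have M0 := bigmax_c_ge0 ha.
have [allz|notall] := boolP [forall k : 'I_n, ccoef alpha n l k == 0].
  exists 0; split => //; split.
    move=> [k [kn ck]]; exfalso.
    by have := forallP allz (Ordinal kn); rewrite (negbTE ck).
  split.
    move=> z hz; have hq := zero_q ha hl hz.
    rewrite qE big1 ?subr0 in hq; last first.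
      by move=> k _; rewrite (eqP (forallP allz k)) mul0r.
    rewrite leNgt; apply/negP => rp.
    by have := exprn_gt0 n rp; rewrite ltNge hq.
  split; first by rewrite le_max ler01.
  by rewrite addr_ge0.
move/forallPn: notall => [k ck].
have [e [e0 qe]] := small ha (ltn_ord k) ck.
set r1 := Num.max 1 _.
have qr1 : 0 <= (q_of_P alpha n l).[r1] by exact: q_r1.
have r1pos : 0 < r1 by apply: lt_le_trans ltr01 _; rewrite le_max lexx.
have er1 : e <= r1.
  rewrite leNgt; apply/negP => h.
  by have := mono ha r1pos h qr1; rewrite ltNge qe.
have [x /andP[ex xr1] rx] := poly_ivt er1 (introT andP (conj qe qr1)).
have qx : (q_of_P alpha n l).[x] = 0 by exact: (eqP rx).
have x0 : 0 < x by apply: lt_le_trans ex.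
have qx0 : 0 <= (q_of_P alpha n l).[x] by rewrite qx.
exists x; split.
  by move=> h; rewrite (h k (ltn_ord k)) eqxx in ck.
split.
  move=> _; split => //; split => // t t0 qt.
  case: (ltgtP t x) => // htx.
    have qt0 : 0 <= (q_of_P alpha n l).[t] by rewrite qt.
    by have := mono ha t0 htx qt0; rewrite qx ltxx.
  by have := mono ha x0 htx qx0; rewrite qt ltxx.
split.
  move=> z hz; rewrite leNgt; apply/negP => xz.
  by have := mono ha x0 xz qx0; rewrite ltNge (zero_q ha hl hz).
split => //.
have r2pos : 0 < 1 + \big[Num.max/0]_(k < n) ccoef alpha n l k.
  by apply: lt_le_trans ltr01 _; rewrite lerDl.
rewrite leNgt; apply/negP => h.
by have := mono ha r2pos h (q_r2 ha); rewrite qx ltxx.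
Qed.
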